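(* Assume the standing hypotheses (H). Then $\frac{n+k-1}{3}$ is an integer.
   Context: A list assignment $L$ assigns to each vertex $v$ a set $L(v)$ of colors; an $L$-coloring is a proper coloring $f$ with $f(v)\in L(v)$ for all $v$; $\mathrm{ch}$ denotes choice number and $\chi$ chromatic number. A part of a complete multipartite graph is one of its maximal stable sets. Standing hypotheses (H): $k\ge1$ and $n\ge 2k+2$ are integers; $G$ is a complete $k$-partite graph (exactly $k$ nonempty parts) on $n$ vertices; $L$ is a list assignment for $G$ with $|L(v)|\ge\lceil (n+k-1)/3\rceil$ for every vertex $v$; $G$ has no $L$-coloring; $\left|\bigcup_{v\in V(G)}L(v)\right|\le n-1$; and every graph $H$ with fewer than $n$ vertices satisfies $\mathrm{ch}(H)\le\max\{\chi(H),\lceil(|V(H)|+\chi(H)-1)/3\rceil\}$. *)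

(* Defs.v *)
From mathcomp Require Import all_boot.
Set Implicit Arguments. Unset Strict Implicit. Unset Printing Implicit Defensive.

(* A (simple) graph: vertex type T : finType, adjacency e : rel T,
   required to be symmetric and irreflexive where used. *)

Definition proper_col (T : finType) (C : Type) (e : rel T) (f : T -> C) : Prop :=
  forall x y, e x y -> f x <> f y.

Definition L_coloring (T : finType) (C : finType) (e : rel T)
  (L : T -> {set C}) (f : T -> C) : Prop :=
  proper_col e f /\ forall v, f v \in L v.

Definition choosable (T : finType) (e : rel T) (m : nat) : Prop :=
  forall (C : finType) (L : T -> {set C}),
    (forall v, m <= #|L v|) -> exists f : T -> C, L_coloring e L f.

Definition colorableb (T : finType) (e : rel T) (k : nat) : bool :=
  [exists f : {ffun T -> 'I_k}, [forall x, forall y, e x y ==> (f x != f y)]].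

(* chromatic number: least k <= |V| such that (T,e) is k-colourable
   (a loopless graph is always |V|-colourable). *)
Definition chi (T : finType) (e : rel T) : nat :=
  \big[minn/#|T|]_(k < #|T|.+1 | colorableb e k) (k : nat).

Definition ceil3 (a : nat) : nat := (a + 2) %/ 3.

Definition complete_multipartite (T : finType) (e : rel T) (k : nat)
  (p : T -> 'I_k) : Prop :=
  (forall i : 'I_k, exists x, p x = i) /\ (forall x y, e x y = (p x != p y)).

(* Main.v *)
Require Import Defs.
From mathcomp Require Import all_boot zify.

Lemma bigmin_le (I : eqType) (s : seq I) (P : pred I) (F : I -> nat) x0 i :
  i \in s -> P i -> \big[minn/x0]_(j <- s | P j) F j <= F i.
Proof.
elim: s => [//|a s IH]; rewrite inE big_cons => /orP [/eqP<-|Hi] Pi.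
  by rewrite Pi geq_minl.
case: (P a); last exact: IH.
by rewrite geq_min IH ?orbT.
Qed.

Lemma chi_le (T : finType) (e : rel T) k : k <= #|T| -> colorableb e k -> chi e <= k.
Proof.
move=> Hk Hc; rewrite /chi.
have := @bigmin_le _ (index_enum 'I_#|T|.+1) (fun i => colorableb e i) (fun i => (i:nat)) #|T| (Ordinal (n:=#|T|.+1) (m:=k) Hk).
by move=> /(_ (mem_index_enum _) Hc).
Qed.

Lemma arith (n k : nat) : 2 <= n -> 1 <= k -> ~~ (3 %| n + k - 1) -> ceil3 (n - 2 + k - 1) <= ceil3 (n+k-1) - 1.
Proof. rewrite /ceil3 /dvdn. lia. Qed.
Lemma count_lem (k : nat) (T : finType) (p : T -> 'I_k) (C : finType) (L : T -> {set C}) :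
  (forall u w c, p u = p w -> c \in L u -> c \in L w -> u = w) ->
  \sum_(v : T) #|L v| <= #|\bigcup_(v : T) L v| * k.
Proof.
move=> H; set U := \bigcup_(v : T) L v.
have E v : #|L v| = \sum_(c in U) (c \in L v : nat).
  rewrite -big_mkcondr /= -sum1_card; apply: eq_bigl => c.
  case Hc: (c \in L v); rewrite ?andbF ?andbT //=.
  idtac.
  by apply/esym/bigcupP; exists v.
rewrite (eq_bigr _ (fun v _ => E v)) exchange_big /= -sum_nat_const.
apply: leq_sum => c _.
have -> : \sum_(v : T) (c \in L v : nat) = #|[set v | c \in L v]|.
  by rewrite -big_mkcondr /= -sum1_card; apply: eq_bigl => v; rewrite inE.
rewrite -[k]card_ord; apply: (@leq_card_in _ _ p) => u w.
by rewrite !inE => Hu Hw Hp; apply: H Hp Hu Hw.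
Qed.

Theorem lemma14 (k n : nat) (T : finType) (e : rel T) (p : T -> 'I_k)
  (C : finType) (L : T -> {set C}) :
  1 <= k ->
  2 * k + 2 <= n ->
  complete_multipartite e p ->
  #|T| = n ->
  (forall v, ceil3 (n + k - 1) <= #|L v|) ->
  ~ (exists f : T -> C, L_coloring e L f) ->
  #|\bigcup_(v : T) L v| <= n - 1 ->
  (forall (V : finType) (h : rel V), symmetric h -> irreflexive h ->
     #|V| < n ->
     choosable h (maxn (chi h) (ceil3 (#|V| + chi h - 1)))) ->
  3 %| (n + k - 1).
Proof.
move=> k1 nk [psurj pe] cardT Lsz noL Usz IH.
apply/negPn/negP => nd.
set m := ceil3 (n + k - 1) in Lsz.
case: (boolP [exists u, exists w, exists c,
   [&& (u != w), (p u == p w), (c \in L u) & (c \in L w)]]) => [Hex|Hnex]; last first.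
  have H : forall u w c, p u = p w -> c \in L u -> c \in L w -> u = w.
    move=> u w c Hp Hu Hw; apply/eqP/negPn/negP => Huw; apply: (negP Hnex).
    apply/existsP; exists u; apply/existsP; exists w; apply/existsP; exists c.
    by rewrite Huw Hp eqxx Hu Hw.
  have := @count_lem _ _ p _ _ H.
  have : n * m <= \sum_(v : T) #|L v|.
    rewrite -cardT -sum_nat_const; exact: leq_sum.
  have : n + k - 1 <= 3 * m by rewrite /m /ceil3; lia.
  move=> h1 h2 h3.
  have h4 : n * (n + k - 1) <= n * (3 * m) by rewrite leq_mul2l h1 orbT.
  have h5 : #|\bigcup_v L v| * k <= (n - 1) * k by rewrite leq_mul2r Usz orbT.
  nia.
case/existsP: Hex => u /existsP [w /existsP [c /and4P [Huw /eqP Hp Hu Hw]]].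
pose P : pred T := fun x => (x != u) && (x != w).
pose V : finType := {x : T | P x}.
pose h : rel V := fun x y => e (val x) (val y).
have cardV : #|V| = n - 2.
  rewrite card_sig.
  have -> : #|P| = #|[set: T] :\ u :\ w|.
    by apply: eq_card => x; rewrite !inE andbT andbC.
  have := cardsD1 u [set: T]; have := cardsD1 w ([set: T] :\ u).
  rewrite !inE eq_sym Huw cardsT cardT /=. lia.
have hsym : symmetric h by move=> x y; rewrite /h !pe eq_sym.
have hirr : irreflexive h by move=> x; rewrite /h pe eqxx.
have hchi : chi h <= k.
  apply: chi_le; first lia.
  apply/existsP; exists [ffun x => p (val x)]; apply/forallP => x; apply/forallP => y.
  by apply/implyP; rewrite /h pe !ffunE.
have := IH V h hsym hirr ltac:(lia) C (fun x => L (val x) :\ c).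
case.
  move=> x; have := cardsD1 c (L (val x)); have := Lsz (val x).
  rewrite geq_max; move=> h1 h2; apply/andP; split.
    move: hchi h1 h2; rewrite /m /ceil3; case: (c \in _) => /=; lia.
  have := @arith n k ltac:(lia) k1 nd.
  move: hchi h1 h2; rewrite cardV /m /ceil3; case: (c \in _) => /=; lia.
move=> f' [f'prop f'L].
pose f x := if insub x is Some y then f' (y : V) else c.
have fdec : forall x, (exists y : V, val y = x /\ f x = f' y) \/ (~~ P x /\ f x = c).
  move=> x; rewrite /f; case: insubP => [y Py <-|nPx]; first by left; exists y.
  by right.
apply: noL; exists f; split.
  move=> x y Hxy.
  case: (fdec x) => [[x' [Ex ->]]|[nPx ->]]; case: (fdec y) => [[y' [Ey ->]]|[nPy ->]].
  - by apply: (f'prop x' y'); rewrite /h Ex Ey.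
  - by have := f'L x'; rewrite !inE => /andP [/eqP ?].
  - by have := f'L y'; rewrite !inE => /andP [/eqP H _] E; apply: H.
  - move: nPx nPy Hxy; rewrite pe /P !negb_and !negbK.
    by case/orP => /eqP->; case/orP => /eqP->; rewrite ?Hp eqxx.
move=> x; case: (fdec x) => [[x' [<- ->]]|[nPx ->]].
  by have := f'L x'; rewrite !inE => /andP [].
by move: nPx; rewrite /P negb_and !negbK; case/orP => /eqP->.
Qed.
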